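(* In the setting below, suppose the tight disturbance bound assumption and the persistent excitation assumption hold, and let $\Theta_t$ be the fixed-complexity parameter set with periodic update. Then for every $\epsilon>0$, every $\theta\in\Theta_0$ such that $[M_\Theta]_i(\theta-\theta^\ast)\ge\epsilon$ for some $i\in\{1,\dots,r\}$, and every $t\in\mathbb{N}_{\ge0}$, $$\Pr\{\theta\in\Theta_t\}\ \le\ \Bigl\{1-\Bigl[p_w\Bigl(\frac{\epsilon\beta}{N_u\tau}\Bigr)\Bigr]^{N_u}\Bigr\}^{\lfloor t/N_u\rfloor}.$$
   Context: Setting: $\theta^\ast\in\mathbb{R}^p$ is a fixed (unknown) parameter vector. $\mathcal{W}=\{w\in\mathbb{R}^{n_x}:\Pi_w w\le\pi_w\}$ is a compact convex polytope with $\pi_w>0$. The disturbances $w_0,w_1,\dots$ are independent random vectors with $w_t\in\mathcal{W}$ for all $t$. $D_0,D_1,\dots\in\mathbb{R}^{n_x\times p}$ is a given (non-random) sequence of regressor matrices. For $t\ge1$ the (random) unfalsified parameter set is $\Delta_t=\{\theta\in\mathbb{R}^p: D_{t-1}(\theta^\ast-\theta)+w_{t-1}\in\mathcal{W}\}$. $\|\cdot\|$ is the Euclidean norm (induced 2-norm for matrices); $\partial\mathcal{W}$ is the boundary of $\mathcal{W}$; $[M]_i$ is the $i$th row of $M$. Tight disturbance bound assumption: there is a function $p_w:(0,\infty)\to(0,1]$ such that for all $w^0\in\partial\mathcal{W}$, all $\epsilon>0$ and all $t\ge0$, $\Pr\{\|w_t-w^0\|<\epsilon\}\ge p_w(\epsilon)$.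 Persistent excitation assumption: there exist $\tau>0$, $\beta>0$ and an integer $N_u\ge\lceil p/n_x\rceil$ such that for every $t\ge0$, $\|D_t\|\le\tau$ and $\sum_{j=t}^{t+N_u-1}D_j^\top D_j\succeq\beta I$. Fixed-complexity parameter set with periodic update: $M_\Theta\in\mathbb{R}^{r\times p}$ has rows of unit Euclidean norm and is such that $\Theta(\mu):=\{\theta:M_\Theta\theta\le\mu\}$ is bounded for every $\mu\in\mathbb{R}^r$; $\Theta_0=\Theta(\mu_0)$ contains $\theta^\ast$. For $t\ge1$: if $t=kN_u$ for some integer $k\ge1$, then $\Theta_t=\Theta(\mu_t)$ with $[\mu_t]_i=\max\{[M_\Theta]_i\theta:\theta\in\Theta_{t-N_u}\cap\bigcap_{j=t-N_u+1}^t\Delta_j\}$ for $i=1,\dots,r$ (the smallest set of the form $\Theta(\mu)$ containing that intersection); otherwise $\Theta_t=\Theta_{t-1}$. *)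

(* Defs.v *)
From HB Require Import structures.
From mathcomp Require Import all_boot all_order all_algebra.
From mathcomp Require Import all_classical all_reals all_analysis.
Import Order.TTheory GRing.Theory Num.Theory numFieldNormedType.Exports numFieldTopology.Exports.

Set Implicit Arguments.
Unset Strict Implicit.
Unset Printing Implicit Defensive.

Local Open Scope classical_set_scope.
Local Open Scope ring_scope.

Section Defs.
Variable R : realType.

(* Euclidean norm of a vector (written for any matrix; used on column and row
   vectors only, where it is the Euclidean norm). *)
Definition vnorm (m n : nat) (A : 'M[R]_(m, n)) : R :=
  Num.sqrt (\sum_(i < m) \sum_(j < n) A i j ^+ 2).

Definition opnorm2 (m n : nat) (A : 'M[R]_(m, n)) : R :=
  sup [set vnorm (A *m v) | v in [set v : 'cV[R]_n | vnorm v <= 1]].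

Definition psd_ge (n : nat) (A : 'M[R]_n) (b : R) : Prop :=
  forall v : 'cV[R]_n, 0 <= ((v^T *m (A - b%:M) *m v) 0 0).

Definition polytope (q n : nat) (Pi : 'M[R]_(q, n)) (pi : 'cV[R]_q)
  : set 'cV[R]_n := [set w | forall k, (Pi *m w) k 0 <= pi k 0].

Definition boundary (n : nat) (A : set 'cV[R]_n) : set 'cV[R]_n :=
  closure A `\` interior A.

Definition ThetaSet (r p : nat) (M : 'M[R]_(r, p)) (mu : 'cV[R]_r)
  : set 'cV[R]_p := [set th | forall i, (M *m th) i 0 <= mu i 0].

Definition borel_cv (n : nat) : set (set 'cV[R]_n) :=
  <<s [set U : set 'cV[R]_n | open U] >>.

Definition is_max (A : set R) (x : R) : Prop :=
  A x /\ forall y, A y -> y <= x.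

Section Prob.
Context {d : measure_display} {Omega : measurableType d}.

Definition random_vector (n : nat) (X : Omega -> 'cV[R]_n) : Prop :=
  forall B, borel_cv B -> measurable (X @^-1` B).

Definition independent_rvecs (P : probability Omega R) (n : nat)
  (w : nat -> Omega -> 'cV[R]_n) : Prop :=
  forall s : seq nat, uniq s ->
  forall B : nat -> set 'cV[R]_n, (forall i, i \in s -> borel_cv (B i)) ->
  P (\bigcap_(i in [set` s]) (w i @^-1` B i)) =
  (\prod_(i <- s) P (w i @^-1` B i))%E.

(* unfalsified set Delta_j (j >= 1) *)
Definition Delta (q nx p : nat) (Pi : 'M[R]_(q, nx)) (pi : 'cV[R]_q)
  (D : nat -> 'M[R]_(nx, p)) (thstar : 'cV[R]_p)
  (w : nat -> Omega -> 'cV[R]_nx) (j : nat) (om : Omega) : set 'cV[R]_p :=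
  [set th | polytope Pi pi (D j.-1 *m (thstar - th) + w j.-1 om)].

End Prob.
End Defs.

(* Main.v *)
Require Import Defs.
From HB Require Import structures.
From mathcomp Require Import all_boot all_order all_algebra.
From mathcomp Require Import all_classical all_reals all_analysis.
From mathcomp Require Import ring lra zify.
Import Order.TTheory GRing.Theory Num.Theory numFieldNormedType.Exports numFieldTopology.Exports.
Local Open Scope classical_set_scope.
Local Open Scope ring_scope.
Set Implicit Arguments.
Unset Strict Implicit.
Unset Printing Implicit Defensive.
Section Alg.
Variable R : realType.

Definition dotv n (x y : 'cV[R]_n) : R := \sum_i x i 0 * y i 0.

Lemma vnormE n (x : 'cV[R]_n) : vnorm x = Num.sqrt (dotv x x).
Proof. by rewrite /vnorm /dotv; congr Num.sqrt; apply: eq_bigr => i _; rewrite big_ord1 expr2. Qed.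

Lemma dotv_ge0 n (x : 'cV[R]_n) : 0 <= dotv x x.
Proof. by apply: sumr_ge0 => i _; rewrite -expr2 sqr_ge0. Qed.

Lemma dotvC n (x y : 'cV[R]_n) : dotv x y = dotv y x.
Proof. by apply: eq_bigr => i _; rewrite mulrC. Qed.

Lemma dotv_mx n (x y : 'cV[R]_n) : dotv x y = (x^T *m y) 0 0.
Proof. by rewrite mxE; apply: eq_bigr => i _; rewrite mxE. Qed.

Lemma dotv_eq0 n (x : 'cV[R]_n) : dotv x x = 0 -> x = 0.
Proof.
move=> h; apply/matrixP => i j; rewrite (ord1 j) mxE.
have hF : forall k : 'I_n, true -> 0 <= x k 0 * x k 0.
  by move=> k _; rewrite -expr2 sqr_ge0.
have := psumr_eq0P hF h (i:=i) isT.
by move/eqP; rewrite mulf_eq0 orbb => /eqP.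
Qed.

Lemma CS_sq n (x y : 'cV[R]_n) : dotv x y ^+ 2 <= dotv x x * dotv y y.
Proof.
set a := dotv x x; set b := dotv x y; set c := dotv y y.
have a0 : 0 <= a by apply: dotv_ge0.
have [a0'|ap] := eqVneq a 0.
  have x0 : x = 0 := dotv_eq0 a0'.
  rewrite a0' mul0r /b x0 /dotv big1; first by rewrite expr2 mul0r.
  by move=> i _; rewrite mxE mul0r.
have ap' : 0 < a by rewrite lt_def ap a0.
have E : \sum_i (a * y i 0 - b * x i 0) ^+ 2 = a * (a * c - b ^+ 2).
  rewrite (eq_bigr (fun i => a^+2 * (y i 0 * y i 0) - (2*a*b) * (x i 0 * y i 0)
     + b^+2 * (x i 0 * x i 0))); last by move=> i _; ring.
  rewrite big_split /= sumrB -!mulr_sumr.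
  rewrite -/(dotv y y) -/(dotv x y) -/(dotv x x) -/a -/b -/c; ring.
have : 0 <= a * (a * c - b ^+ 2) by rewrite -E; apply: sumr_ge0 => i _; apply: sqr_ge0.
by rewrite pmulr_rge0 // subr_ge0.
Qed.

Lemma CS n (x y : 'cV[R]_n) : dotv x y <= vnorm x * vnorm y.
Proof.
rewrite !vnormE -sqrtrM ?dotv_ge0 //.
apply: (le_trans (ler_norm _)); rewrite -sqrtr_sqr ler_sqrt ?CS_sq //.
by apply: mulr_ge0; apply: dotv_ge0.
Qed.

Lemma vnorm_ge0 m n (A : 'M[R]_(m, n)) : 0 <= vnorm A.
Proof. exact: sqrtr_ge0. Qed.

Lemma vnorm0 n : vnorm (0 : 'cV[R]_n) = 0.
Proof. by rewrite vnormE /dotv big1 ?sqrtr0 // => i _; rewrite mxE mul0r. Qed.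

Lemma vnorm_eq0 n (x : 'cV[R]_n) : vnorm x = 0 -> x = 0.
Proof.
rewrite vnormE => /eqP; rewrite sqrtr_eq0 => h; apply: dotv_eq0.
by apply/eqP; rewrite eq_le h dotv_ge0.
Qed.

Lemma vnormZ n (a : R) (x : 'cV[R]_n) : vnorm (a *: x) = `|a| * vnorm x.
Proof.
rewrite !vnormE -sqrtr_sqr -sqrtrM ?sqr_ge0 //; congr Num.sqrt.
rewrite /dotv mulr_sumr; apply: eq_bigr => i _; rewrite !mxE; ring.
Qed.

Lemma frob m n (A : 'M[R]_(m, n)) (x : 'cV[R]_n) : vnorm (A *m x) <= vnorm A * vnorm x.
Proof.
rewrite [vnorm (A *m x)]vnormE [vnorm x]vnormE /vnorm -sqrtrM; last first.
  by apply: sumr_ge0 => i _; apply: sumr_ge0 => j _; apply: sqr_ge0.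
rewrite ler_sqrt; last first.
  by apply: mulr_ge0; [apply: sumr_ge0 => i _; apply: sumr_ge0 => j _; apply: sqr_ge0|apply: dotv_ge0].
rewrite mulr_suml; apply: ler_sum => i _.
have := CS_sq (\col_j A i j) x.
have -> : dotv (\col_j A i j) x = (A *m x) i 0.
  by rewrite /dotv mxE; apply: eq_bigr => j _; rewrite mxE.
have -> : dotv (\col_j A i j) (\col_j A i j) = \sum_j A i j ^+ 2.
  by apply: eq_bigr => j _; rewrite !mxE expr2.
by rewrite expr2.
Qed.

Lemma opnorm_bound m n (A : 'M[R]_(m, n)) (x : 'cV[R]_n) :
  vnorm (A *m x) <= opnorm2 A * vnorm x.
Proof.
set S := [set vnorm (A *m v) | v in [set v : 'cV[R]_n | vnorm v <= 1]].
have hs : has_sup S.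
  split; first by exists (vnorm (A *m (0 : 'cV[R]_n))); exists 0 => //; rewrite /= vnorm0.
  exists (vnorm A) => _ [v /= hv <-].
  apply: (le_trans (frob _ _)); rewrite -[leRHS]mulr1 ler_wpM2l //; exact: vnorm_ge0.
have [x0|xn0] := eqVneq (vnorm x) 0.
  by rewrite x0 mulr0 (vnorm_eq0 x0) mulmx0 vnorm0.
have xp : 0 < vnorm x by rewrite lt_def xn0 vnorm_ge0.
set u := (vnorm x)^-1 *: x.
have hu : vnorm u <= 1.
  by rewrite vnormZ ger0_norm ?mulVf // invr_ge0 ltW.
have : vnorm (A *m u) <= opnorm2 A by apply: sup_upper_bound => //; exists u.
rewrite /u -scalemxAr vnormZ ger0_norm; last by rewrite invr_ge0 ltW.
move=> h; rewrite -ler_pdivrMr // mulrC; exact: h.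
Qed.

Lemma psd_quad n (S : 'M[R]_n) (b : R) (v : 'cV[R]_n) : psd_ge S b ->
  b * dotv v v <= dotv v (S *m v).
Proof.
have E : v^T *m (S - b%:M) *m v = v^T *m (S *m v) - b *: (v^T *m v).
  by rewrite mulmxBr mulmxBl mul_mx_scalar -scalemxAl mulmxA.
move=> /(_ v); rewrite E.
have -> : (v^T *m (S *m v) - b *: (v^T *m v)) 0 0 = (v^T *m (S *m v)) 0 0 - b * (v^T *m v) 0 0.
  by rewrite !mxE.
by rewrite -!dotv_mx subr_ge0.
Qed.

Lemma psd_unit n (S : 'M[R]_n) (b : R) : 0 < b -> psd_ge S b -> S \in unitmx.
Proof.
move=> b0 hS; rewrite unitmxE unitfE; apply/negP => /det0P [v vn0 hv].
have h := psd_quad v^T hS.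
have e : dotv v^T (S *m v^T) = 0 by rewrite dotv_mx trmxK mulmxA hv mul0mx mxE.
rewrite e pmulr_rle0 // in h.
have : v^T = 0 by apply: dotv_eq0; apply/eqP; rewrite eq_le h dotv_ge0.
by move/(congr1 trmx); rewrite trmxK trmx0 => /eqP; rewrite (negbTE vn0).
Qed.

Lemma psd_solve n (S : 'M[R]_n) (b : R) (d : 'cV[R]_n) : 0 < b -> psd_ge S b ->
  exists v, S *m v = d /\ b * vnorm v <= vnorm d.
Proof.
move=> b0 hS; have Su := psd_unit b0 hS.
exists (invmx S *m d); split; first by rewrite mulmxA mulmxV // mul1mx.
set v := invmx S *m d.
have Sv : S *m v = d by rewrite mulmxA mulmxV // mul1mx.
have h1 := psd_quad v hS; rewrite Sv in h1.
have h2 := CS v d.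
have [v0|vn0] := eqVneq (vnorm v) 0; first by rewrite v0 mulr0 vnorm_ge0.
have vp : 0 < vnorm v by rewrite lt_def vn0 vnorm_ge0.
have : b * vnorm v * vnorm v <= vnorm d * vnorm v.
  rewrite -mulrA -expr2 [in X in _ * X <= _]vnormE sqr_sqrtr ?dotv_ge0 //.
  by apply: (le_trans h1); rewrite mulrC.
by rewrite ler_pM2r.
Qed.

End Alg.
Section Topo.
Variable R : realType.

Lemma lin_cont n k (A : 'M[R]_(k, n)) (l : 'I_k) :
  continuous (fun x : 'cV[R]_n => (A *m x) l 0).
Proof.
have -> : (fun x : 'cV[R]_n => (A *m x) l 0) = (fun x => \sum_(j < n) (A l j * x j 0)).
  by apply: funext => x; rewrite mxE.
apply: continuous_big; first exact: add_continuous.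
move=> j _ x; apply: (@continuousM _ _ (fun=> A l j) (fun x : 'cV[R]_n => x j 0)).
  exact: cst_continuous.
exact: coord_continuous.
Qed.

Lemma vnorm_cont m n : continuous (fun x : 'M[R]_(m, n) => vnorm x).
Proof.
move=> x; apply: (@continuous_comp _ _ _ (fun x : 'M[R]_(m, n) => \sum_i \sum_j x i j ^+ 2)
   (@Num.sqrt R)); last exact: sqrt_continuous.
have -> : (fun x : 'M[R]_(m, n) => \sum_i \sum_j x i j ^+ 2) =
   (fun x => \sum_i \sum_j (x i j * x i j)).
  by apply: funext => y; apply: eq_bigr => i _; apply: eq_bigr => j _; rewrite expr2.
apply: continuous_big; first exact: add_continuous.
move=> i _ y; apply: continuous_big; first exact: add_continuous.
move=> j _ z; apply: (@continuousM _ _ (fun x : 'M[R]_(m, n) => x i j) (fun x => x i j));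
  exact: coord_continuous.
Qed.

Lemma ball_open n (w0 : 'cV[R]_n) (e : R) : open [set x | vnorm (x - w0) < e].
Proof.
have -> : [set x | vnorm (x - w0) < e] = (fun x => vnorm (x - w0)) @^-1` [set y | y < e] by [].
apply: open_comp; last exact: open_lt.
move=> x _; apply: (@continuous_comp _ _ _ (fun x : 'cV[R]_n => x - w0) (fun x => vnorm x)).
  apply: (@continuousB _ _ _ id (fun=> w0)); [exact: cvg_id| exact: cst_continuous].
exact: vnorm_cont.
Qed.

Lemma borel_open n (U : set 'cV[R]_n) : open U -> borel_cv U.
Proof. by move=> oU; apply: sub_gen_smallest. Qed.

Lemma borel_closed n (U : set 'cV[R]_n) : closed U -> borel_cv U.
Proof.
move=> cU; rewrite -(setCK U); apply: sigma_algebraC; apply: borel_open.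
exact: closed_openC.
Qed.

Lemma half_closed n k (A : 'M[R]_(k, n)) (y : 'cV[R]_n) (l : 'I_k) (c : R) :
  closed [set x : 'cV[R]_n | (A *m (y + x)) l 0 <= c].
Proof.
have -> : [set x : 'cV[R]_n | (A *m (y + x)) l 0 <= c] =
  (fun x => (A *m y) l 0 + (A *m x) l 0) @^-1` [set z | z <= c].
  by apply: funext => x; rewrite /= mulmxDr mxE.
apply: closed_comp; last exact: closed_le.
move=> x _; apply: (@continuousD _ _ _ (fun=> (A *m y) l 0) (fun x => (A *m x) l 0)).
  exact: cst_continuous.
exact: lin_cont.
Qed.

Lemma dotv_cont n (g : 'cV[R]_n) : continuous (fun w => dotv g w).
Proof.
have -> : (fun w => dotv g w) = (fun w => (g^T *m w) 0 0) by apply: funext => w; rewrite dotv_mx.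
exact: lin_cont.
Qed.

Lemma argmin_ex n (W : set 'cV[R]_n) (g : 'cV[R]_n) : W !=set0 -> compact W ->
  exists2 w0, W w0 & forall w, W w -> dotv g w0 <= dotv g w.
Proof.
move=> W0 cW.
have := @compact_EVT_max _ R (fun w => - dotv g w) W W0 cW.
case.
  apply: continuous_subspaceT => x.
  by apply: (@continuousN _ _ _ (fun w => dotv g w)); exact: dotv_cont.
move=> w0 /set_mem Ww0 h; exists w0 => // w Ww.
by have := h w (mem_set Ww); rewrite lerN2.
Qed.

Lemma dotvBZ n (g w u : 'cV[R]_n) (a : R) : dotv g (w - a *: u) = dotv g w - a * dotv g u.
Proof. by rewrite /dotv mulr_sumr -sumrB; apply: eq_bigr => i _; rewrite !mxE; ring. Qed.

Lemma argmin_boundary n (W : set 'cV[R]_n) (g w0 : 'cV[R]_n) : g != 0 -> W w0 ->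
  (forall w, W w -> dotv g w0 <= dotv g w) -> boundary W w0.
Proof.
move=> gn0 Ww0 hmin; split; first exact: subset_closure.
move=> /nbhs_ballP [e /= e0 he].
set u := `|g|.
have u0 : 0 <= u := normr_ge0 g.
set de := e / (u + 1).
have de0 : 0 < de by rewrite /de divr_gt0 // ltr_wpDl.
have hd : de * (u + 1) = e by rewrite /de divfK // gt_eqF // ltr_wpDl.
have : W (w0 - de *: g).
  apply: he; rewrite -ball_normE /= opprB addrC subrK normrZ gtr0_norm //.
  rewrite mulrDr mulr1 in hd; change (de * u < e); lra.
move/hmin; rewrite dotvBZ.
have gg : 0 < dotv g g.
  rewrite lt_def dotv_ge0 andbT; apply/eqP => /dotv_eq0 /eqP; exact/negP.
move=> h; have := mulr_gt0 de0 gg; lra.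

Qed.

End Topo.
Section Compact.
Variable R : realType.

Lemma trmx_norm_le m n (M : 'M[R]_(m, n)) : `|M^T| <= `|M|.
Proof.
rewrite [`|M^T|]/Num.Def.normr /= mx_normrE; apply: bigmax_le => //= ij _.
rewrite mxE; rewrite [leRHS]/Num.Def.normr /= mx_normrE.
exact: (le_bigmax _ (fun ij : 'I_m * 'I_n => `|M ij.1 ij.2|) (ij.2, ij.1)).
Qed.

Lemma trmx_cont m n : continuous (@trmx R m n).
Proof.
move=> x S /nbhs_ballP [e e0 he]; apply/nbhs_ballP; exists e => // y hy; apply: he.
move: hy; rewrite -!ball_normE /= => h; apply: le_lt_trans h.
by rewrite -linearB /=; apply: trmx_norm_le.
Qed.

Lemma entry_le_vnorm m n (A : 'M[R]_(m, n)) i j : `|A i j| <= vnorm A.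
Proof.
rewrite -sqrtr_sqr ler_sqrt; last first.
  by apply: sumr_ge0 => k _; apply: sumr_ge0 => l _; apply: sqr_ge0.
rewrite (bigD1 i) //= -[X in X <= _]addr0; apply: lerD; last first.
  by apply: sumr_ge0 => k _; apply: sumr_ge0 => l _; apply: sqr_ge0.
rewrite (bigD1 j) //= -[X in X <= _]addr0; apply: lerD => //.
by apply: sumr_ge0 => l _; apply: sqr_ge0.
Qed.

Lemma mxnorm_le_vnorm m n (A : 'M[R]_(m, n)) : `|A| <= vnorm A.
Proof.
rewrite [`|A|]/Num.Def.normr /= mx_normrE; apply: bigmax_le => //=; first exact: vnorm_ge0.
move=> ij _; exact: entry_le_vnorm.
Qed.

Lemma cV_compact p (A : set 'cV[R]_p) (C : R) :
  (forall x, A x -> vnorm x <= C) -> closed A -> compact A.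
Proof.
move=> hC cA.
set B := [set y : 'rV[R]_p | A y^T].
have -> : A = trmx @` B.
  apply/seteqP; split => [x Ax|_ [y By <-]]; last exact: By.
  by exists x^T; rewrite /B /= trmxK.
apply: continuous_compact; first by apply: continuous_subspaceT; exact: trmx_cont.
apply: bounded_closed_compact.
  rewrite /bounded_near; apply: filterS (nbhs_pinfty_ge (num_real C)) => M CM y By.
  apply: le_trans CM; apply: le_trans (hC _ By).
  apply: le_trans (mxnorm_le_vnorm _).
  by have := trmx_norm_le y^T; rewrite trmxK.
apply: closed_comp => //; move=> x _; exact: trmx_cont.
Qed.

Lemma nested_nonempty (T : ptopologicalType) (K : set T) (F : nat -> set T) :
  compact K -> (forall n, closed (F n)) -> (forall n, F n `<=` K) ->
  (forall n m, (n <= m)%N -> F m `<=` F n) -> (forall n, F n !=set0) ->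
  exists x, forall n, F n x.
Proof.
move=> cK cF FK Fdec Fne.
move: cK; rewrite compact_In0 => /(_ nat setT F).
case.
- exists F => // n _; apply/seteqP; split => x.
    by move=> Fx; split => //; exact: (FK n x Fx).
  by case.
- move=> D' _; have [x Fx] := Fne (\max_(i <- finmap.enum_fset D') i).
  exists x => i /= iD; apply: (Fdec i (\max_(j <- finmap.enum_fset D') j)); last exact: Fx.
  by apply: leq_bigmax_seq.
- by move=> x hx; exists x => n; apply: hx.
Qed.

End Compact.

Section MeasHelp.
Context {d : measure_display} {T : measurableType d}.

Lemma meas_forall (I : countType) (Q : I -> set T) :
  (forall i, measurable (Q i)) -> measurable [set om | forall i, Q i om].
Proof.
move=> hQ.
have -> : [set om | forall i, Q i om] =
  \bigcap_n (match @unpickle I n with Some i => Q i | None => setT end).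
  apply/seteqP; split => [om h n _|om h i].
    by case: (unpickle n) => // i; apply: h.
  by have := h (pickle i) Logic.I; rewrite pickleK.
by apply: bigcapT_measurable => n; case: (unpickle n).
Qed.

Lemma meas_exists (I : countType) (Q : I -> set T) :
  (forall i, measurable (Q i)) -> measurable [set om | exists i, Q i om].
Proof.
move=> hQ.
have -> : [set om | exists i, Q i om] =
  \bigcup_n (match @unpickle I n with Some i => Q i | None => set0 end).
  apply/seteqP; split => [om [i h]|om [n _]].
    by exists (pickle i) => //; rewrite pickleK.
  by case: (unpickle n) => // i h; exists i.
by apply: bigcupT_measurable => n; case: (unpickle n).
Qed.

Lemma meas_const (P : Prop) : measurable [set _ : T | P].
Proof.
case: (pselect P) => h.
  by have -> : [set _ : T | P] = setT by apply/seteqP; split.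
by have -> : [set _ : T | P] = set0 by apply/seteqP; split.
Qed.

Lemma meas_imply (b : bool) (Q : set T) :
  measurable Q -> measurable [set om | b -> Q om].
Proof.
case: b => hQ.
  have -> : [set om | true -> Q om] = Q.
    by apply/seteqP; split => om /= h; [exact: h|move=> _].
  exact: hQ.
by have -> : [set om : T | false -> Q om] = setT by apply/seteqP; split.
Qed.

Lemma meas_and (Q1 Q2 : set T) : measurable Q1 -> measurable Q2 ->
  measurable [set om | Q1 om /\ Q2 om].
Proof. by move=> h1 h2; apply: measurableI. Qed.

End MeasHelp.
Section MuStruct.
Variables (R : realType) (d : measure_display) (Omega : measurableType d).
Variables (p nx q r : nat) (thstar : 'cV[R]_p) (Pi : 'M[R]_(q, nx)) (pi : 'cV[R]_q)
  (w : nat -> Omega -> 'cV[R]_nx) (D : nat -> 'M[R]_(nx, p)) (N : nat)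
  (M : 'M[R]_(r, p)) (mu0 : 'cV[R]_r) (mu : nat -> Omega -> 'cV[R]_r).
Hypothesis HN : (0 < N)%N.
Hypothesis Hmu_upd : forall om t, (exists k, (1 <= k)%N /\ t = (k * N)%N) ->
     forall i, is_max
       [set (M *m th) i 0 | th in
         [set th | ThetaSet M (mu (t - N)%N om) th /\
                   forall j, (t - N < j <= t)%N ->
                     Delta Pi pi D thstar w j om th]]
       (mu t om i 0).
Hypothesis Hmu_keep : forall om t, (1 <= t)%N ->
     ~ (exists k, (1 <= k)%N /\ t = (k * N)%N) ->
     mu t om = mu t.-1 om.

Lemma upd_iff t : (1 <= t)%N -> (exists k, (1 <= k)%N /\ t = (k * N)%N) <-> (N %| t)%N.
Proof.
move=> t1; split => [[k [_ ->]]|/dvdnP [k tk]]; first exact: dvdn_mull.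
exists k; split => //; rewrite lt0n; apply/eqP => k0; move: t1; by rewrite tk k0.
Qed.

Lemma mu_floor t om : mu t om = mu (t %/ N * N)%N om.
Proof.
elim: t => [|t IH]; first by rewrite div0n.
have [dv|ndv] := boolP (N %| t.+1)%N; first by rewrite divnK.
rewrite Hmu_keep //; last by rewrite upd_iff //; apply/negP.
by rewrite /= IH divnS // (negbTE ndv) add0n.
Qed.

Lemma mu_upd_ex om k i : exists th,
  [/\ ThetaSet M (mu (k * N)%N om) th,
      forall j, (k * N < j <= k.+1 * N)%N -> Delta Pi pi D thstar w j om th &
      (M *m th) i 0 = mu (k.+1 * N)%N om i 0].
Proof.
have := Hmu_upd om (t := (k.+1 * N)%N) _ i; case.
  by exists k.+1.
move=> [th [h1 h2] h3] _; exists th; split => //.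
- by move: h1; rewrite mulSn addKn.
- by move=> j hj; apply: h2; rewrite mulSn addKn.
Qed.

Lemma mu_dec om k i : mu (k.+1 * N)%N om i 0 <= mu (k * N)%N om i 0.
Proof. by have [th [h1 _ <-]] := mu_upd_ex om k i; apply: h1. Qed.

Lemma mu_dec_le om k K i : (k <= K)%N -> mu (K * N)%N om i 0 <= mu (k * N)%N om i 0.
Proof.
elim: K => [|K IH]; first by rewrite leqn0 => /eqP ->.
rewrite leq_eqVlt => /orP [/eqP -> //|]; rewrite ltnS => /IH h.
exact: le_trans (mu_dec _ _ _) h.
Qed.

Lemma theta_mono om t th k : ThetaSet M (mu t om) th -> (k * N <= t)%N ->
  ThetaSet M (mu (k * N)%N om) th.
Proof.
move=> h hk i; apply: le_trans (h i) _; rewrite mu_floor.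
apply: mu_dec_le; by rewrite leq_divRL.
Qed.

End MuStruct.
Section DotLin.
Variable R : realType.
Lemma dotvD n (g a b : 'cV[R]_n) : dotv g (a + b) = dotv g a + dotv g b.
Proof. by rewrite /dotv -big_split; apply: eq_bigr => i _; rewrite !mxE mulrDr. Qed.
Lemma dotvN n (g a : 'cV[R]_n) : dotv g (- a) = - dotv g a.
Proof. by rewrite /dotv -sumrN; apply: eq_bigr => i _; rewrite !mxE mulrN. Qed.
Lemma dotvB n (g a b : 'cV[R]_n) : dotv g (a - b) = dotv g a - dotv g b.
Proof. by rewrite dotvD dotvN. Qed.
Lemma dotv_rowM r p (M : 'M[R]_(r, p)) i (y : 'cV[R]_p) : (M *m y) i 0 = dotv (row i M)^T y.
Proof. by rewrite mxE; apply: eq_bigr => j _; rewrite !mxE. Qed.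
Lemma dotv_rowM2 r p (M : 'M[R]_(r, p)) i (y : 'cV[R]_p) : ((row i M) *m y) 0 0 = dotv (row i M)^T y.
Proof. by rewrite mxE; apply: eq_bigr => j _; rewrite !mxE. Qed.
Lemma dotv_sumS nx p (D : nat -> 'M[R]_(nx, p)) (s : seq nat) (x v : 'cV[R]_p) :
  dotv x ((\sum_(j <- s) (D j)^T *m D j) *m v) = \sum_(j <- s) dotv (D j *m x) (D j *m v).
Proof.
rewrite dotv_mx mulmx_suml mulmx_sumr summxE; apply: eq_bigr => j _.
by rewrite dotv_mx trmx_mul !mulmxA.
Qed.
End DotLin.

Section Geo.
Variables (R : realType) (d : measure_display) (Omega : measurableType d).
Variables (p nx q r : nat) (thstar : 'cV[R]_p) (Pi : 'M[R]_(q, nx)) (pi : 'cV[R]_q)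
  (w : nat -> Omega -> 'cV[R]_nx) (D : nat -> 'M[R]_(nx, p)) (N : nat)
  (M : 'M[R]_(r, p)) (mu0 : 'cV[R]_r) (mu : nat -> Omega -> 'cV[R]_r).
Hypothesis Hmu_upd : forall om t, (exists k, (1 <= k)%N /\ t = (k * N)%N) ->
     forall i, is_max
       [set (M *m th) i 0 | th in
         [set th | ThetaSet M (mu (t - N)%N om) th /\
                   forall j, (t - N < j <= t)%N ->
                     Delta Pi pi D thstar w j om th]]
       (mu t om i 0).

Lemma exclusion om k (i : 'I_r) (th : 'cV[R]_p) (eps beta tau : R) (v : 'cV[R]_p)
  (w0 : nat -> 'cV[R]_nx) :
  (0 < N)%N -> 0 < eps -> 0 < beta -> 0 < tau ->
  (\sum_(k * N <= j < k * N + N) (D j)^T *m D j) *m v = (row i M)^T ->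
  beta * vnorm v <= 1 ->
  (forall j (x : 'cV[R]_p), vnorm (D j *m x) <= tau * vnorm x) ->
  (forall j z, (k * N <= j < k * N + N)%N -> polytope Pi pi z ->
     dotv (D j *m v) (w0 j) <= dotv (D j *m v) z) ->
  eps <= ((row i M) *m (th - thstar)) 0 0 ->
  (forall j : 'I_N, vnorm (w (k * N + j)%N om - w0 (k * N + j)%N) < eps * beta / (N%:R * tau)) ->
  ~ ThetaSet M (mu (k.+1 * N)%N om) th.
Proof.
move=> HN eps0 beta0 tau0 hS hv htau hw0 hth hev hT.
have [th' [_ hD hmax]] := mu_upd_ex Hmu_upd om k i.
have h1 : (M *m th) i 0 <= (M *m th') i 0 by rewrite hmax; apply: hT.
set dd := (row i M)^T.
set x := th' - thstar.
set eps' := eps * beta / (N%:R * tau).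
set b := \big[Order.max/0]_(j < N) vnorm (w (k * N + j)%N om - w0 (k * N + j)%N).
have b0 : 0 <= b.
  rewrite /b; elim/big_ind: _ => //= [a c ha hc|j _]; last exact: vnorm_ge0.
  by rewrite le_max ha.
have c0 : 0 < N%:R * tau by rewrite mulr_gt0 // ltr0n.
have eps'0 : 0 < eps' by rewrite /eps' divr_gt0 // mulr_gt0.
have beps : b < eps'.
  by rewrite /b; apply: bigmax_lt => // j _; apply: hev.
have hterm : forall j, (k * N <= j < k * N + N)%N ->
    dotv (D j *m x) (D j *m v) <= tau * vnorm v * b.
  move=> j hjw; have /andP [j1 j2] := hjw.
  set u := D j *m v.
  have hDj := hD j.+1; rewrite /= in hDj.
  have : Delta Pi pi D thstar w j.+1 om th'.
    apply: hDj; rewrite ltnS j1 /= mulSn addnC.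
    exact: j2.
  rewrite /Delta /= => hpol.
  have := hw0 j _ hjw hpol.
  rewrite dotvD (_ : D j *m (thstar - th') = - (D j *m x)); last first.
    by rewrite /x -mulmxN opprB.
  rewrite dotvN => hmin.
  have e1 : dotv (D j *m x) u = dotv u (D j *m x) by rewrite dotvC.
  rewrite e1.
  have hcs := CS u (w j om - w0 j).
  rewrite dotvB in hcs.
  have hb : vnorm (w j om - w0 j) <= b.
    have -> : j = (k * N + (j - k * N))%N by rewrite subnKC.
    have jN : (j - k * N < N)%N by rewrite ltn_subLR.
    exact: (le_bigmax _ (fun j0 : 'I_N => vnorm (w (k * N + j0)%N om - w0 (k * N + j0)%N)) (Ordinal jN)).
  have hu : vnorm u <= tau * vnorm v by apply: htau.
  have hu0 : 0 <= vnorm u by apply: vnorm_ge0.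
  have : vnorm u * vnorm (w j om - w0 j) <= tau * vnorm v * b.
    apply: le_trans (_ : vnorm u * b <= _).
      by apply: ler_wpM2l.
    by apply: ler_wpM2r.
  lra.
have key : dotv dd x < eps.
  have -> : dotv dd x = dotv x dd by rewrite dotvC.
  rewrite /dd -hS dotv_sumS.
  apply: le_lt_trans (_ : \sum_(k * N <= j < k * N + N) (tau * vnorm v * b) < eps).
    by rewrite big_nat [X in _ <= X]big_nat; apply: ler_sum => j; apply: hterm.
  rewrite sumr_const_nat addKn -mulr_natl.
  have hv0 : 0 <= vnorm v by apply: vnorm_ge0.
  set c := N%:R * tau.
  have ce : c * eps' = eps * beta by rewrite /eps' mulrC divfK // gt_eqF.
  have h2 : c * b < eps * beta by rewrite -ce ltr_pM2l.
  have h3 : N%:R * (tau * vnorm v * b) * beta <= c * b.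
    have -> : N%:R * (tau * vnorm v * b) * beta = (c * b) * (beta * vnorm v) by rewrite /c; ring.
    rewrite -[X in _ <= X]mulr1; apply: ler_wpM2l => //; apply: mulr_ge0 => //; exact: ltW.
  have : N%:R * (tau * vnorm v * b) * beta < eps * beta by apply: le_lt_trans h3 h2.
  by rewrite ltr_pM2r.
have : (M *m th') i 0 < (M *m th) i 0.
  move: hth; rewrite dotv_rowM2 !dotv_rowM -/dd => hth.
  rewrite dotvB in hth; move: key; rewrite /x !dotvB -/dd; lra.
by move=> lt; move: h1; rewrite leNgt lt.
Qed.

End Geo.
Section Approx.
Variable R : realType.

Lemma closed_forall (T : topologicalType) (I : Type) (Q : I -> set T) :
  (forall i, closed (Q i)) -> closed [set x | forall i, Q i x].
Proof.
move=> hQ; have -> : [set x | forall i, Q i x] = \bigcap_(i in setT) Q i.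
  by apply/seteqP; split => x h i //; apply: h.
by apply: closed_bigI => i _; apply: hQ.
Qed.

Lemma closed_imply (T : topologicalType) (b : bool) (Q : set T) :
  closed Q -> closed [set x | b -> Q x].
Proof.
case: b => hQ.
  have -> : [set x | true -> Q x] = Q by apply/seteqP; split => x /= h; [exact: h|move=> _].
  exact: hQ.
by have -> : [set x : T | false -> Q x] = setT by apply/seteqP; split.
Qed.

Lemma le_of_all_eps (a b : R) : (forall n : nat, a <= b + (n.+1%:R)^-1) -> a <= b.
Proof.
move=> h; apply/ler_addgt0Pr => e e0.
apply: le_trans (h (Num.Def.trunc e^-1)) _; rewrite lerD2l.
rewrite -[leRHS]invrK lef_pV2.
- exact: ltW (truncnS_gt _).
- by rewrite posrE ltr0n.
- by rewrite posrE invr_gt0.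
Qed.

Lemma rat_approx p (th : 'cV[R]_p) (C eta : R) : 0 < eta -> 0 <= C ->
  exists qv : 'cV[rat]_p, forall m (A : 'M[R]_(m, p)) l,
    \sum_j `|A l j| <= C -> `|(A *m (th - map_mx ratr qv)) l 0| <= eta.
Proof.
move=> eta0 C0.
set de := eta / (C + 1).
have de0 : 0 < de by rewrite /de divr_gt0 // ltr_wpDl.
have hex : forall j : 'I_p, exists qq : rat, ratr qq \in `](th j 0 - de), (th j 0 + de)[.
  move=> j; apply: rat_in_itvoo; lra.
pose qf j := projT1 (cid (hex j)).
have hq : forall j, `|th j 0 - ratr (qf j)| <= de.
  move=> j; have := projT2 (cid (hex j)); rewrite in_itv /= -/(qf j) => /andP [h1 h2].
  rewrite ler_norml; apply/andP; split; lra.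
exists (\col_j qf j) => m A l hA.
rewrite mxE; apply: le_trans (ler_norm_sum _ _ _) _.
apply: le_trans (_ : \sum_j `|A l j| * de <= _).
  apply: ler_sum => j _; rewrite normrM; apply: ler_wpM2l => //.
  by rewrite !mxE.
rewrite -mulr_suml.
apply: le_trans (_ : C * de <= _); first by apply: ler_wpM2r => //; exact: ltW.
have hd : de * (C + 1) = eta by rewrite /de divfK // gt_eqF // ltr_wpDl.
rewrite mulrDr mulr1 in hd.
have : 0 <= de by exact: ltW.
nra.
Qed.

Lemma sum_term_le (I : finType) (F : I -> R) (i : I) :
  (forall j, 0 <= F j) -> F i <= \sum_j F j.
Proof.
move=> h; rewrite (bigD1 i) //= -[X in X <= _]addr0; apply: lerD => //.
by apply: sumr_ge0 => j _; apply: h.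
Qed.

End Approx.
Section MeasMu.
Variables (R : realType) (d : measure_display) (Omega : measurableType d).
Variables (p nx q r : nat) (thstar : 'cV[R]_p) (Pi : 'M[R]_(q, nx)) (pi : 'cV[R]_q)
  (w : nat -> Omega -> 'cV[R]_nx) (D : nat -> 'M[R]_(nx, p)) (N : nat)
  (M : 'M[R]_(r, p)) (mu0 : 'cV[R]_r) (mu : nat -> Omega -> 'cV[R]_r).
Hypothesis HN : (0 < N)%N.
Hypothesis Hmu_upd : forall om t, (exists k, (1 <= k)%N /\ t = (k * N)%N) ->
     forall i, is_max
       [set (M *m th) i 0 | th in
         [set th | ThetaSet M (mu (t - N)%N om) th /\
                   forall j, (t - N < j <= t)%N ->
                     Delta Pi pi D thstar w j om th]]
       (mu t om i 0).
Hypothesis Hmu_keep : forall om t, (1 <= t)%N ->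
     ~ (exists k, (1 <= k)%N /\ t = (k * N)%N) ->
     mu t om = mu t.-1 om.
Hypothesis Hmu0 : forall om, mu 0 om = mu0.
Hypothesis Hwrv : forall t, random_vector (w t).
Hypothesis HMbounded : forall m : 'cV[R]_r, exists C : R,
     forall th, ThetaSet M m th -> vnorm th <= C.

Definition en (n : nat) : R := (n.+1%:R)^-1.

Lemma en_gt0 n : 0 < en n.
Proof. by rewrite /en invr_gt0 ltr0n. Qed.

Lemma en_le1 n : en n <= 1.
Proof. by rewrite /en invr_le1 ?unitfE ?pnatr_eq0 ?ltr0n // ler1n. Qed.

Lemma en_dec n m : (n <= m)%N -> en m <= en n.
Proof. by move=> nm; rewrite /en lef_pV2 ?posrE ?ltr0n // ler_nat. Qed.

Definition polyc j om (th : 'cV[R]_p) l := (Pi *m (D j *m (thstar - th) + w j om)) l 0.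

Definition ExF k om th := ThetaSet M (mu (k * N)%N om) th /\
  forall j, (k * N <= j < k * N + N)%N -> forall l, polyc j om th l <= pi l 0.

Definition ApF k om (i : 'I_r) (c : R) n th :=
  [/\ forall l, (M *m th) l 0 - en n <= mu (k * N)%N om l 0,
      forall j, (k * N <= j < k * N + N)%N -> forall l, polyc j om th l <= pi l 0 + en n &
      c - en n <= (M *m th) i 0].

Lemma char1 k om i c : c <= mu (k.+1 * N)%N om i 0 <-> exists th, ExF k om th /\ c <= (M *m th) i 0.
Proof.
split.
  move=> hc; have [th [h1 h2 h3]] := mu_upd_ex Hmu_upd om k i.
  exists th; split; last by rewrite h3.
  split => // j /andP [j1 j2] l.
  have := h2 j.+1; rewrite /Delta /polytope /= => h; apply: h.
  by rewrite ltnS j1 mulSn addnC.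
move=> [th [[h1 h2] h3]]; apply: le_trans h3 _.
have := Hmu_upd om (t := (k.+1 * N)%N) _ i; case; first by exists k.+1.
move=> _; apply; exists th => //; split.
  by rewrite mulSn addKn.
move=> j; rewrite mulSn addKn => /andP [j1 j2].
rewrite /Delta /polytope => l.
have jpos : (0 < j)%N by apply: leq_ltn_trans j1.
have := h2 j.-1 _ l; rewrite /polyc; apply.
lia.
Qed.

Lemma mxBE m n (A B : 'M[R]_(m, n)) i j : (A - B) i j = A i j - B i j.
Proof. by rewrite !mxE. Qed.
Lemma mxDE m n (A B : 'M[R]_(m, n)) i j : (A + B) i j = A i j + B i j.
Proof. by rewrite !mxE. Qed.

Lemma polyc_shift j om th th' l :
  polyc j om th' l = polyc j om th l + ((Pi *m D j) *m (th - th')) l 0.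
Proof.
rewrite /polyc -mxDE; congr (_ _ _).
rewrite -mulmxA -mulmxDr; congr (_ *m _).
rewrite addrAC -mulmxDr; congr (_ + _); congr (_ *m _).
by rewrite addrA subrK.
Qed.


Lemma polyc_aff j om l :
  (fun th => polyc j om th l) =
  (fun th => (Pi *m (D j *m thstar + w j om)) l 0 - ((Pi *m D j) *m th) l 0).
Proof.
apply: funext => th; rewrite /polyc -mxBE; congr (_ _ _).
by rewrite mulmxBr addrAC mulmxDr mulmxBr mulmxDr !mulmxA.
Qed.

Lemma polyc_cont j om l : continuous (fun th => polyc j om th l).
Proof.
rewrite polyc_aff => th.
apply: (@continuousB _ _ _ (fun=> _) (fun th => ((Pi *m D j) *m th) l 0)).
  exact: cst_continuous.
exact: lin_cont.
Qed.

Lemma closed_le_cont (T : topologicalType) (f : T -> R) (a : R) :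
  continuous f -> closed [set x | f x <= a].
Proof.
move=> fc; have -> : [set x | f x <= a] = f @^-1` [set y | y <= a] by [].
by apply: closed_comp; [move=> x _; exact: fc|exact: closed_le].
Qed.

Lemma closed_ge_cont (T : topologicalType) (f : T -> R) (a : R) :
  continuous f -> closed [set x | a <= f x].
Proof.
move=> fc; have -> : [set x | a <= f x] = f @^-1` [set y | a <= y] by [].
by apply: closed_comp; [move=> x _; exact: fc|exact: closed_ge].
Qed.

Lemma ApF_closed k om i c n : closed [set th | ApF k om i c n th].
Proof.
have -> : [set th | ApF k om i c n th] =
  [set th | forall l, (M *m th) l 0 <= mu (k * N)%N om l 0 + en n] `&`
  ([set th | forall j, (k * N <= j < k * N + N)%N -> forall l, polyc j om th l <= pi l 0 + en n] `&`
  [set th | c - en n <= (M *m th) i 0]).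
  apply/seteqP; split => th.
    by case=> h1 h2 h3; split; [move=> l; rewrite -lerBlDr|split].
  by case=> h1 [h2 h3]; split => // l; rewrite lerBlDr.
apply: closedI; first by apply: closed_forall => l; apply: closed_le_cont; exact: lin_cont.
apply: closedI; last by apply: closed_ge_cont; exact: lin_cont.
apply: closed_forall => j; apply: closed_imply; apply: closed_forall => l.
by apply: closed_le_cont; exact: polyc_cont.
Qed.

Lemma char2 k om i c : (exists th, ExF k om th /\ c <= (M *m th) i 0) <->
  forall n, exists qv : 'cV[rat]_p, ApF k om i c n (map_mx ratr qv).
Proof.
split.
  move=> [th [[h1 h2] h3]] n.
  set C := \sum_l \sum_j `|M l j| + \sum_(j < k * N + N) \sum_l \sum_m `|(Pi *m D j) l m|.
  have hge1 : 0 <= \sum_l \sum_j `|M l j| by do 2 (apply: sumr_ge0 => ? _).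
  have hge2 : 0 <= \sum_(j < k * N + N) \sum_l \sum_m `|(Pi *m D j) l m|.
    by do 3 (apply: sumr_ge0 => ? _).
  have [qv hq] := rat_approx th (en_gt0 n) (addr_ge0 hge1 hge2).
  exists qv; set qR := map_mx ratr qv.
  have hM : forall l, `|(M *m (th - qR)) l 0| <= en n.
    move=> l; apply: hq; apply: le_trans (_ : \sum_l \sum_j `|M l j| <= C); last by rewrite /C lerDl.
    by apply: (sum_term_le (F := fun l0 => \sum_j `|M l0 j|) l) => l'; apply: sumr_ge0.
  have hP : forall j, (j < k * N + N)%N -> forall l, `|((Pi *m D j) *m (th - qR)) l 0| <= en n.
    move=> j jK l; apply: hq.
    apply: le_trans (_ : \sum_(j' < k * N + N) \sum_l \sum_m `|(Pi *m D j') l m| <= C); last by rewrite /C lerDr.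
    apply: le_trans (sum_term_le (F := fun l => \sum_m `|(Pi *m D j) l m|) l _) _.
      by move=> l'; apply: sumr_ge0.
    have := sum_term_le (F := fun j : 'I_(k * N + N) => \sum_l \sum_m `|(Pi *m D j) l m|) (Ordinal jK).
    by apply => j'; do 2 (apply: sumr_ge0 => ? _).
  have eM : forall l, (M *m qR) l 0 = (M *m th) l 0 - (M *m (th - qR)) l 0.
    by move=> l; rewrite -mxBE mulmxBr opprB addrC subrK.
  split.
  - move=> l; rewrite eM; have := hM l; rewrite ler_norml => /andP [ha hb].
    have := h1 l; lra.
  - move=> j hj l; rewrite (polyc_shift j om th qR l).
    have jK : (j < k * N + N)%N by case/andP: hj.
    have := hP j jK l; rewrite ler_norml => /andP [ha hb].
    have := h2 j hj l; lra.
  - rewrite eM; have := hM i; rewrite ler_norml => /andP [a b]; lra.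
move=> hn.
have [C hC] := HMbounded (mu (k * N)%N om + const_mx 1).
set K := ThetaSet M (mu (k * N)%N om + const_mx 1).
have cK : compact K.
  apply: (cV_compact hC).
  rewrite /K /ThetaSet; apply: closed_forall => l; apply: closed_le_cont; exact: lin_cont.
have hne : exists th, forall n, ApF k om i c n th.
  apply: (nested_nonempty (F := fun n => [set th | ApF k om i c n th]) cK
    (fun n0 => ApF_closed (k:=k) (om:=om) (i:=i) (c:=c) (n:=n0))).
  - move=> n th' [h1 _ _] l; rewrite mxDE (_ : const_mx 1 l 0 = 1); last by rewrite mxE.
    have := h1 l; have := en_le1 n; lra.
  - move=> n m nm th' [h1 h2 h3]; have := en_dec nm; split.
    + move=> l; have := h1 l; lra.
    + move=> j hj l; have := h2 j hj l; lra.
    + lra.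
  - by move=> n; have [qv hqv] := hn n; exists (map_mx ratr qv).
case: hne => th hth.
exists th; split; last first.
  apply: le_of_all_eps => n; case: (hth n) => _ _; rewrite -/(en n); lra.
split.
  move=> l; apply: le_of_all_eps => n; case: (hth n) => h _ _; have := h l; rewrite -/(en n); lra.
move=> j hj l; apply: le_of_all_eps => n; case: (hth n) => _ h _; rewrite -/(en n); exact: h.
Qed.


Lemma w_half_meas j th l a : measurable [set om | polyc j om th l <= a].
Proof.
have -> : [set om | polyc j om th l <= a] =
  w j @^-1` [set x | (Pi *m (D j *m (thstar - th) + x)) l 0 <= a] by [].
by apply: Hwrv; apply: borel_closed; apply: half_closed.
Qed.

Lemma meas_and3 (A B C : set Omega) : measurable A -> measurable B -> measurable C ->
  measurable [set om | [/\ A om, B om & C om]].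
Proof.
move=> hA hB hC.
have -> : [set om | [/\ A om, B om & C om]] = A `&` (B `&` C).
  by apply/seteqP; split => om; [case|case=> ? []].
by apply: measurableI => //; apply: measurableI.
Qed.

Lemma mu_meas t i c : measurable [set om | c <= mu t om i 0].
Proof.
elim/ltn_ind: t i c => t IH i c.
case: t IH => [|t] IH.
  rewrite (_ : [set om | c <= mu 0 om i 0] = [set _ | c <= mu0 i 0]); first exact: meas_const.
  by apply/seteqP; split => om; rewrite /= Hmu0.
have [dv|ndv] := boolP (N %| t.+1)%N.
  set k := (t.+1 %/ N).-1.
  have ek : t.+1 = (k.+1 * N)%N.
    by rewrite /k prednK ?divnK // divn_gt0 // dvdn_leq.
  have -> : [set om | c <= mu t.+1 om i 0] =
      [set om | forall n, exists qv : 'cV[rat]_p, ApF k om i c n (map_mx ratr qv)].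
    apply/seteqP; split => om /=; rewrite ek.
      by move=> h; apply/char2/char1.
    by move=> h; apply/char1/char2.
  apply: meas_forall => n; apply: meas_exists => qv.
  apply: meas_and3.
  - apply: meas_forall => l.
    by apply: IH; rewrite ek mulSn -[X in (X < _)%N]add0n ltn_add2r.
  - by apply: meas_forall => j; apply: meas_imply; apply: meas_forall => l; apply: w_half_meas.
  - exact: meas_const.
have -> : [set om | c <= mu t.+1 om i 0] = [set om | c <= mu t om i 0].
  have hk : forall om, mu t.+1 om = mu t om.
    move=> om; apply: Hmu_keep => // hex.
    by have := (@upd_iff N t.+1 isT).1 hex; rewrite (negbTE ndv).
  by apply/seteqP; split => om /=; rewrite hk.
exact: IH.
Qed.

Lemma theta_meas t th : measurable [set om | ThetaSet M (mu t om) th].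
Proof. by apply: meas_forall => l; apply: mu_meas. Qed.

End MeasMu.
Section Prob.
Variables (R : realType) (d : measure_display) (Omega : measurableType d).
Variable (P : probability Omega R).
Variables (nx : nat) (w : nat -> Omega -> 'cV[R]_nx) (U : nat -> set 'cV[R]_nx) (N : nat).
Hypothesis HU : forall j, borel_cv (U j).
Hypothesis Hwrv : forall t, random_vector (w t).
Hypothesis Hwind : independent_rvecs P w.

Definition pr (A : set Omega) : R := fine (P A).

Lemma prE A : measurable A -> P A = (pr A)%:E.
Proof. by move=> mA; rewrite /pr fineK //; apply: fin_num_measure. Qed.

Lemma pr_ge0 A : measurable A -> 0 <= pr A.
Proof. by move=> mA; rewrite -lee_fin -prE //; apply: measure_ge0. Qed.

Lemma pr_le1 A : measurable A -> pr A <= 1.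
Proof. by move=> mA; rewrite -lee_fin -prE //; apply: probability_le1. Qed.

Definition Bv j := w j @^-1` U j.
Definition Fs (s : seq nat) := [set om | forall j, j \in s -> Bv j om].
Definition Cw k := Fs (iota (k * N) N).
Definition Ev K := [set om | forall k, (k < K)%N -> ~ Cw k om].

Lemma Bv_meas j : measurable (Bv j).
Proof. exact: Hwrv. Qed.

Lemma Fs_meas s : measurable (Fs s).
Proof. by apply: meas_forall => j; apply: meas_imply; apply: Bv_meas. Qed.

Lemma Ev_meas K : measurable (Ev K).
Proof.
apply: meas_forall => k; apply: meas_imply.
by apply: measurableC; apply: Fs_meas.
Qed.

Lemma indep s : uniq s -> pr (Fs s) = \prod_(j <- s) pr (Bv j).
Proof.
move=> us; have := Hwind us (B := U) (fun i _ => HU i).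
have -> : \bigcap_(i in [set` s]) (w i @^-1` U i) = Fs s.
  by apply/seteqP; split => om h j js; apply: h.
rewrite prE; last exact: Fs_meas.
rewrite (eq_bigr (fun j => (pr (Bv j))%:E)); last by move=> j _; rewrite prE //; apply: Bv_meas.
by rewrite prodEFin => /eqP; rewrite eqe => /eqP.
Qed.

Lemma claim K s : uniq s -> (forall j, j \in s -> K * N <= j)%N ->
  pr (Ev K `&` Fs s) = (\prod_(k < K) (1 - pr (Cw k))) * \prod_(j <- s) pr (Bv j).
Proof.
elim: K s => [|K IH] s us hs.
  rewrite big_ord0 mul1r -indep //; congr pr.
  by apply/seteqP; split => om; [case|move=> h; split => // k].
have e1 : Ev K.+1 `&` Fs s = (Ev K `&` Fs s) `\` Cw K.
  apply/seteqP; split => om.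
    case=> hE hF; split; [split => // k kK; apply: hE; exact: ltnW|].
    by apply: hE.
  case=> -[hE hF] hC; split => // k; rewrite ltnS leq_eqVlt => /orP [/eqP ->|]; first exact: hC.
  exact: hE.
have e2 : (Ev K `&` Fs s) `&` Cw K = Ev K `&` Fs (iota (K * N) N ++ s).
  apply/seteqP; split => om.
    case=> -[hE hF] hC; split => // j; rewrite mem_cat => /orP [] hj; [exact: hC|exact: hF].
  case=> hE hF; split; first split.
  - exact: hE.
  - by move=> j hj; apply: hF; rewrite mem_cat hj orbT.
  - by move=> j hj; apply: hF; rewrite mem_cat hj.
have us2 : uniq (iota (K * N) N ++ s).
  rewrite cat_uniq iota_uniq us andbT /=; apply/hasPn => j js; rewrite mem_iota.
  have := hs j js; rewrite mulSn; lia.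
have hs2 : forall j, j \in iota (K * N) N ++ s -> (K * N <= j)%N.
  move=> j; rewrite mem_cat mem_iota => /orP [/andP [] //|js].
  by have := hs j js; rewrite mulSn; lia.
have hs1 : forall j, j \in s -> (K * N <= j)%N.
  by move=> j js; have := hs j js; rewrite mulSn; lia.
have mEF : measurable (Ev K `&` Fs s) by apply: measurableI; [apply: Ev_meas|apply: Fs_meas].
have mC : measurable (Cw K) := Fs_meas (iota (K * N) N).
have lt : (P (Ev K `&` Fs s) < +oo)%E by rewrite prE // ltry.
have hD : pr ((Ev K `&` Fs s) `\` Cw K) = pr (Ev K `&` Fs s) - pr ((Ev K `&` Fs s) `&` Cw K).
  rewrite /pr -fineB; first exact: (congr1 fine (measureD (mu := P) mEF mC lt)).
  - exact: fin_num_measure.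
  - by apply: fin_num_measure; apply: measurableI.
rewrite e1 hD e2.
rewrite (IH s us hs1) (IH _ us2 hs2) big_cat /= big_ord_recr /=.
have -> : pr (Cw K) = \prod_(j <- iota (K * N) N) pr (Bv j) by apply: indep; apply: iota_uniq.
ring.
Qed.

End Prob.
Section Final.
Variable R : realType.
Lemma vnorm_tr m n (A : 'M[R]_(m, n)) : vnorm A^T = vnorm A.
Proof.
rewrite /vnorm exchange_big; congr Num.sqrt; apply: eq_bigr => j _.
by apply: eq_bigr => i _; rewrite mxE.
Qed.
Lemma dotv0l n (y : 'cV[R]_n) : dotv 0 y = 0.
Proof. by rewrite /dotv big1 // => i _; rewrite mxE mul0r. Qed.
Lemma prod_const_seq (s : seq nat) (c : R) : \prod_(j <- s) c = c ^+ size s.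
Proof. by elim: s => [|a s IH]; rewrite ?big_nil ?expr0 // big_cons IH exprS. Qed.
Lemma prod_const_ord K (c : R) : \prod_(k < K) c = c ^+ K.
Proof. by elim: K => [|K IH]; rewrite ?big_ord0 ?expr0 // big_ord_recr IH exprSr. Qed.
End Final.

Unset Implicit Arguments.
Theorem theorem3
  (R : realType) (d : measure_display) (Omega : measurableType d)
  (P : probability Omega R)
  (p nx q r : nat)
  (thstar : 'cV[R]_p)
  (Pi : 'M[R]_(q, nx)) (pi : 'cV[R]_q)
  (w : nat -> Omega -> 'cV[R]_nx)
  (D : nat -> 'M[R]_(nx, p))
  (p_w : R -> R) (tau beta : R) (N_u : nat)
  (M : 'M[R]_(r, p)) (mu0 : 'cV[R]_r)
  (mu : nat -> Omega -> 'cV[R]_r)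
  (* the disturbance set W *)
  (HWcompact : compact (polytope Pi pi))
  (Hpi : forall k, 0 < pi k 0)
  (* disturbances: independent random vectors with values in W *)
  (Hwrv : forall t, random_vector (w t))
  (Hwind : independent_rvecs P w)
  (HwW : forall t om, polytope Pi pi (w t om))
  (* tight disturbance bound assumption *)
  (Hpw : forall e : R, 0 < e -> 0 < p_w e <= 1)
  (Htight : forall w0, boundary (polytope Pi pi) w0 ->
     forall e : R, 0 < e -> forall t,
     ((p_w e)%:E <= P [set om | (vnorm (w t om - w0) < e)%R])%E)
  (* persistent excitation assumption *)
  (Htau : 0 < tau) (Hbeta : 0 < beta)
  (HNu : Num.ceil ((p%:R : R) / nx%:R) <= (N_u%:Z))
  (HDnorm : forall t, opnorm2 (D t) <= tau)
  (HPE : forall t,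
     psd_ge (\sum_(t <= j < t + N_u) ((D j)^T *m D j)) beta)
  (* fixed-complexity parameter set with periodic update *)
  (HMrows : forall i, vnorm (row i M) = 1)
  (HMbounded : forall m : 'cV[R]_r, exists C : R,
     forall th, ThetaSet M m th -> vnorm th <= C)
  (Hstar0 : ThetaSet M mu0 thstar)
  (Hmu0 : forall om, mu 0 om = mu0)
  (Hmu_upd : forall om t, (exists k, (1 <= k)%N /\ t = (k * N_u)%N) ->
     forall i, is_max
       [set (M *m th) i 0 | th in
         [set th | ThetaSet M (mu (t - N_u)%N om) th /\
                   forall j, (t - N_u < j <= t)%N ->
                     Delta Pi pi D thstar w j om th]]
       (mu t om i 0))
  (Hmu_keep : forall om t, (1 <= t)%N ->
     ~ (exists k, (1 <= k)%N /\ t = (k * N_u)%N) ->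
     mu t om = mu t.-1 om) :
  forall eps : R, 0 < eps ->
  forall th, ThetaSet M mu0 th ->
  (exists i, eps <= ((row i M) *m (th - thstar)) 0 0) ->
  forall t : nat,
  (P [set om | ThetaSet M (mu t om) th] <=
   ((1 - (p_w (eps * beta / (N_u%:R * tau))) ^+ N_u) ^+ (t %/ N_u))%:E)%E.
Proof.
move=> eps eps0 th hth0 [i hi] t.
set dd := (row i M)^T.
have hdd : vnorm dd = 1 by rewrite vnorm_tr HMrows.
have hdd2 : dotv dd dd = 1.
  by have := hdd; rewrite vnormE => h; rewrite -(sqr_sqrtr (dotv_ge0 dd)) h expr1n.
have HN : (0 < N_u)%N.
  rewrite lt0n; apply/eqP => N0.
  have := psd_quad dd (HPE 0%N); rewrite N0 addn0 big_geq // mul0mx dotvC dotv0l hdd2 mulr1.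
  by rewrite leNgt Hbeta.
have Htau' : forall j (x : 'cV[R]_p), vnorm (D j *m x) <= tau * vnorm x.
  move=> j x; apply: le_trans (opnorm_bound _ _) _; apply: ler_wpM2r; [exact: vnorm_ge0|exact: HDnorm].
have hv : forall k, exists v, (\sum_(k * N_u <= j < k * N_u + N_u) (D j)^T *m D j) *m v = dd /\
    beta * vnorm v <= 1.
  move=> k; have [v [h1 h2]] := psd_solve dd Hbeta (HPE (k * N_u)%N).
  by exists v; split => //; rewrite -hdd.
pose vf k := projT1 (cid (hv k)).
have hvf : forall k, (\sum_(k * N_u <= j < k * N_u + N_u) (D j)^T *m D j) *m vf k = dd /\
    beta * vnorm (vf k) <= 1 := fun k => projT2 (cid (hv k)).
have nx0 : (0 < nx)%N.
  rewrite lt0n; apply/eqP => nx0; subst nx.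
  have [h1 _] := hvf 0%N.
  have : dd = 0.
    rewrite -h1 mulmx_suml big1 // => j _.
    by rewrite -mulmxA (flatmx0 (D j *m vf 0%N)) mulmx0.
  by move=> dd0; move: hdd; rewrite dd0 vnorm0 => /eqP; rewrite eq_sym oner_eq0.
set e0 : 'cV[R]_nx := delta_mx (Ordinal nx0) 0.
have e0n0 : e0 != 0.
  apply/negP => /eqP /matrixP /(_ (Ordinal nx0) 0); rewrite !mxE !eqxx /=.
  by move/eqP; rewrite oner_eq0.
have W0 : polytope Pi pi 0.
  by move=> k; rewrite mulmx0 mxE; apply: ltW.
have hw0ex : forall j, exists w0, boundary (polytope Pi pi) w0 /\
    forall z, polytope Pi pi z -> dotv (D j *m vf (j %/ N_u)%N) w0 <= dotv (D j *m vf (j %/ N_u)%N) z.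
  move=> j; set u := D j *m vf (j %/ N_u)%N.
  set g := if u == 0 then e0 else u.
  have gn0 : g != 0.
    rewrite /g; have [u0|un0] := eqVneq u 0; first exact: e0n0.
    exact: un0.
  have [w0 Ww0 hmin] := argmin_ex g (ex_intro _ 0 W0) HWcompact.
  exists w0; split; first exact: argmin_boundary gn0 Ww0 hmin.
  move=> z Wz; have [u0|un0] := eqVneq u 0; first by rewrite u0 !dotv0l.
  by have := hmin z Wz; rewrite /g (negbTE un0).
pose w0f j := projT1 (cid (hw0ex j)).
have hw0f : forall j, boundary (polytope Pi pi) (w0f j) /\
    forall z, polytope Pi pi z -> dotv (D j *m vf (j %/ N_u)%N) (w0f j) <= dotv (D j *m vf (j %/ N_u)%N) z :=
  fun j => projT2 (cid (hw0ex j)).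
set eps' := eps * beta / (N_u%:R * tau).
have eps'0 : 0 < eps' by rewrite /eps' divr_gt0 // mulr_gt0 // ltr0n.
pose U j := [set x : 'cV[R]_nx | vnorm (x - w0f j) < eps'].
have HU : forall j, borel_cv (U j) by move=> j; apply: borel_open; apply: ball_open.
set K := (t %/ N_u)%N.
have hsub : [set om | ThetaSet M (mu t om) th] `<=` Ev w U N_u K.
  move=> om hT k kK hC.
  have hk : (k.+1 * N_u <= t)%N by rewrite -leq_divRL.
  apply: (exclusion Hmu_upd HN eps0 Hbeta Htau (hvf k).1 (hvf k).2 Htau' _ hi _
     (theta_mono HN Hmu_upd Hmu_keep hT hk)).
  - move=> j z hj Wz.
    have ej : (j %/ N_u)%N = k.
      have -> : j = (k * N_u + (j - k * N_u))%N by rewrite subnKC //; case/andP: hj.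
      rewrite divnMDl // divn_small ?addn0 //; case/andP: hj => h1 h2; lia.
    have h := (hw0f j).2 z Wz; rewrite ej in h; exact: h.
  - move=> j; apply: (hC (k * N_u + j)%N); rewrite mem_iota leq_addr /=.
    by rewrite ltn_add2l.
have mS := theta_meas HN Hmu_upd Hmu_keep Hmu0 Hwrv HMbounded t th.
have mE := Ev_meas N_u HU Hwrv K.
apply: le_trans (le_measure P (mem_set mS) (mem_set mE) hsub) _.
apply: (@le_trans _ _ ((pr P (Ev w U N_u K))%:E)).
  by rewrite -(prE P mE); exact: lexx.
rewrite lee_fin.
have -> : pr P (Ev w U N_u K) = \prod_(k < K) (1 - pr P (Cw w U N_u k)).
  have hnil : forall j : nat, j \in [::] -> (K * N_u <= j)%N by [].
  have := @claim _ _ _ P _ w U N_u HU Hwrv Hwind K [::] isT hnil.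
  rewrite big_nil mulr1 => <-; congr pr.
  by apply/seteqP; split => om; [move=> h; split => // j|case].
rewrite -/eps' -(prod_const_ord K (1 - p_w eps' ^+ N_u)).
have [pw0 pw1] := andP (Hpw _ eps'0).
apply: ler_prod => k _; apply/andP; split.
  by rewrite subr_ge0 (pr_le1 P (Fs_meas HU Hwrv _)).
suff : p_w eps' ^+ N_u <= pr P (Cw w U N_u k) by lra.
rewrite /Cw indep ?iota_uniq //.
have -> : p_w eps' ^+ N_u = \prod_(j <- iota (k * N_u) N_u) p_w eps'.
  by rewrite prod_const_seq size_iota.
apply: ler_prod => j _; rewrite ltW //=.
have h : ((p_w eps')%:E <= P (Bv w U j))%E := Htight (w0f j) (hw0f j).1 eps' eps'0 j.
by rewrite (prE P (Bv_meas HU Hwrv j)) lee_fin in h.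
Qed.
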